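(* Let $T:X\to Y$ be a linear operator between Archimedean vector lattices. Then $T$ satisfies condition $(\beta)$ if and only if $T$ satisfies condition $(\beta_0)$.
   Context: All vector lattices are Archimedean. For a subset $A$ of a vector lattice $X$, $A^d=\{x\in X: |x|\wedge|a|=0 \text{ for all } a\in A\}$ and $A^{dd}=(A^d)^d$. For $a,b\in X$ we write $a\lhd b$ if $\{a\}^{dd}\subseteq\{b\}^{dd}$; $a$ and $b$ are of the same width if $\{a\}^{dd}=\{b\}^{dd}$. A linear operator $T$ satisfies condition $(\beta)$ if $Ta\lhd Tb$ whenever $a\lhd b$. It satisfies condition $(\beta_0)$ if whenever $a,b\in X$ are of the same width, $Ta$ and $Tb$ are of the same width in $Y$. *)

(* Defs.v *)
From HB Require Import structures.
From mathcomp Require Import all_boot all_order all_algebra.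
From mathcomp Require Import reals.
Set Implicit Arguments. Unset Strict Implicit. Unset Printing Implicit Defensive.
Import Order.TTheory GRing.Theory Num.Theory.
Local Open Scope ring_scope.

Record vlattice (R : realType) (X : lmodType R) := VLattice {
  vle : X -> X -> Prop;
  vjoin : X -> X -> X;
  vle_refl : forall x, vle x x;
  vle_anti : forall x y, vle x y -> vle y x -> x = y;
  vle_trans : forall x y z, vle x y -> vle y z -> vle x z;
  vle_add : forall x y z, vle x y -> vle (x + z) (y + z);
  vle_scale : forall (c : R) x y, 0 <= c -> vle x y -> vle (c *: x) (c *: y);
  vjoin_ubl : forall x y, vle x (vjoin x y);
  vjoin_ubr : forall x y, vle y (vjoin x y);
  vjoin_lub : forall x y z, vle x z -> vle y z -> vle (vjoin x y) z
}.

Section VL.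
Variables (R : realType) (X : lmodType R) (L : vlattice X).

Definition vmeet (x y : X) : X := - vjoin L (- x) (- y).
Definition vabs (x : X) : X := vjoin L x (- x).

Definition archimedean : Prop :=
  forall x y : X, vle L 0 x -> (forall n : nat, vle L (x *+ n) y) -> x = 0.

Definition disj (A : X -> Prop) : X -> Prop :=
  fun x => forall a, A a -> vmeet (vabs x) (vabs a) = 0.

Definition band_dd (a : X) : X -> Prop := disj (disj (fun x => x = a)).

Definition lhd (a b : X) : Prop := forall x, band_dd a x -> band_dd b x.

Definition same_width (a b : X) : Prop := band_dd a = band_dd b.
End VL.

Definition cond_beta (R : realType) (X Y : lmodType R)
  (LX : vlattice X) (LY : vlattice Y) (T : X -> Y) : Prop :=
  forall a b : X, lhd LX a b -> lhd LY (T a) (T b).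

Definition cond_beta0 (R : realType) (X Y : lmodType R)
  (LX : vlattice X) (LY : vlattice Y) (T : X -> Y) : Prop :=
  forall a b : X, same_width LX a b -> same_width LY (T a) (T b).

(* Main.v *)
Require Import Defs.
From HB Require Import structures.
From mathcomp Require Import all_boot all_order all_algebra.
From mathcomp Require Import reals.
From Stdlib Require Import FunctionalExtensionality PropExtensionality.
Set Implicit Arguments. Unset Strict Implicit. Unset Printing Implicit Defensive.
Import Order.TTheory GRing.Theory Num.Theory.
Local Open Scope ring_scope.

Section Lat.
Variables (R : realType) (X : lmodType R) (L : vlattice X).
Local Notation le := (vle L).
Local Notation jn := (vjoin L).
Local Notation mt := (@vmeet R X L).
Local Notation ab := (@vabs R X L).

Lemma le_addr x y z : le (x + z) (y + z) -> le x y.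
Proof.
move=> h; have := vle_add (-z) h; by rewrite !addrK.
Qed.

Lemma le_opp x y : le x y -> le (-y) (-x).
Proof.
move=> h; have := vle_add (-x - y) h.
have -> : x + (- x - y) = - y by rewrite addrA subrr add0r.
have -> : y + (- x - y) = - x by rewrite addrC addrNK.
done.
Qed.

Lemma le_add2 a b c d : le a b -> le c d -> le (a + c) (b + d).
Proof.
move=> h1 h2; apply: (vle_trans (vle_add c h1)).
rewrite ![b + _]addrC; exact: vle_add.
Qed.

Lemma join_comm x y : jn x y = jn y x.
Proof.
apply: vle_anti; apply: vjoin_lub; (apply: vjoin_ubl || apply: vjoin_ubr).
Qed.

Lemma meet_lbl x y : le (mt x y) x.
Proof. rewrite /vmeet -{2}(opprK x); apply: le_opp; exact: vjoin_ubl. Qed.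
Lemma meet_lbr x y : le (mt x y) y.
Proof. rewrite /vmeet -{2}(opprK y); apply: le_opp; exact: vjoin_ubr. Qed.
Lemma meet_glb x y z : le z x -> le z y -> le z (mt x y).
Proof.
move=> h1 h2; rewrite /vmeet -(opprK z); apply: le_opp.
apply: vjoin_lub; exact: le_opp.
Qed.

Lemma meet_comm x y : mt x y = mt y x.
Proof. by rewrite /vmeet join_comm. Qed.

Lemma meet_translate x y z : mt (x + z) (y + z) = mt x y + z.
Proof.
apply: vle_anti.
- apply: (@le_addr _ _ (-z)); rewrite addrK; apply: meet_glb.
  + apply: (@le_addr _ _ z); rewrite addrNK; exact: meet_lbl.
  + apply: (@le_addr _ _ z); rewrite addrNK; exact: meet_lbr.
- apply: meet_glb; apply: vle_add; [exact: meet_lbl|exact: meet_lbr].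
Qed.

Lemma meet_mono u u' w : le u u' -> le (mt u w) (mt u' w).
Proof.
move=> h; apply: meet_glb; [exact: vle_trans (meet_lbl _ _) h|exact: meet_lbr].
Qed.

Lemma abs_ge0 x : le 0 (ab x).
Proof.
have h : le 0 (ab x + ab x).
  rewrite -(subrr x); apply: le_add2; [exact: vjoin_ubl|exact: vjoin_ubr].
have h2 : 0 <= (2:R)^-1 by rewrite invr_ge0 ler0n.
have := vle_scale h2 h.
rewrite scaler0 -mulr2n -scaler_nat scalerA mulVf ?scale1r //.
by rewrite pnatr_eq0.
Qed.

Lemma abs_opp x : ab (- x) = ab x.
Proof. by rewrite /vabs opprK join_comm. Qed.

Lemma abs_pos p : le 0 p -> ab p = p.
Proof.
move=> h; apply: vle_anti; last exact: vjoin_ubl.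
apply: vjoin_lub; first exact: vle_refl.
have h' := le_opp h; rewrite oppr0 in h'; exact: vle_trans h' h.
Qed.

Lemma abs_add x y : le (ab (x + y)) (ab x + ab y).
Proof.
apply: vjoin_lub; first by apply: le_add2; exact: vjoin_ubl.
rewrite opprD; apply: le_add2; exact: vjoin_ubr.
Qed.

Lemma meet_ge0 u w : le 0 u -> le 0 w -> le 0 (mt u w).
Proof. exact: meet_glb. Qed.

Lemma riesz u v w : le 0 u -> le 0 v -> le 0 w ->
  le (mt (u + v) w) (mt u w + mt v w).
Proof.
move=> hu hv hw.
set m := mt (u + v) w.
have hvw : le 0 (mt v w) by exact: meet_ge0.
rewrite -meet_translate; apply: meet_glb.
- apply: (@le_addr _ _ (-u)).
  rewrite [u + _]addrC addrK; apply: meet_glb.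
  + apply: (@le_addr _ _ u); rewrite addrNK addrC; exact: meet_lbl.
  + apply: (@le_addr _ _ u); rewrite addrNK.
    apply: vle_trans (meet_lbr _ _) _.
    by rewrite -{1}[w]addr0; apply: le_add2; [exact: vle_refl|].
- apply: vle_trans (meet_lbr _ _) _.
  by rewrite -{1}[w]addr0; apply: le_add2; [exact: vle_refl|].
Qed.

Definition dsj x y := mt (ab x) (ab y) = 0.

Lemma dsj_sym x y : dsj x y -> dsj y x.
Proof. by rewrite /dsj meet_comm. Qed.

Lemma dsj_add x y a : dsj x a -> dsj y a -> dsj (x + y) a.
Proof.
rewrite /dsj => h1 h2; apply: vle_anti; last by apply: meet_ge0; exact: abs_ge0.
apply: vle_trans (meet_mono _ (abs_add x y)) _.
apply: vle_trans (riesz (abs_ge0 x) (abs_ge0 y) (abs_ge0 a)) _.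
rewrite h1 h2 addr0; exact: vle_refl.
Qed.

Lemma dsj_opp x a : dsj x a -> dsj (- x) a.
Proof. by rewrite /dsj abs_opp. Qed.

Lemma dsj_sub x y a : dsj x a -> dsj y a -> dsj (x - y) a.
Proof. move=> h1 h2; apply: dsj_add h1 _; exact: dsj_opp. Qed.

Lemma band_ddE a x : band_dd L a x <-> (forall y, dsj y a -> dsj x y).
Proof.
split=> h y.
- move=> hy; apply: h => a' ->; exact: hy.
- move=> hy; apply: h; exact: hy.
Qed.

Lemma band_dd_self a : band_dd L a a.
Proof. apply/band_ddE => y; exact: dsj_sym. Qed.

Lemma band_dd_sub a x y : band_dd L a x -> band_dd L a y -> band_dd L a (x - y).
Proof.
move=> /band_ddE h1 /band_ddE h2; apply/band_ddE => z hz.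
apply: dsj_sub; [exact: h1|exact: h2].
Qed.

Lemma band_dd_add a x y : band_dd L a x -> band_dd L a y -> band_dd L a (x + y).
Proof.
move=> /band_ddE h1 /band_ddE h2; apply/band_ddE => z hz.
apply: dsj_add; [exact: h1|exact: h2].
Qed.

Lemma lhd_of a b : band_dd L b a -> lhd L a b.
Proof.
move=> /band_ddE h x /band_ddE hx; apply/band_ddE => y hy.
apply: hx; apply: dsj_sym; exact: h.
Qed.

Lemma band_of_lhd a b : lhd L a b -> band_dd L b a.
Proof. move=> h; apply: h; exact: band_dd_self. Qed.

Lemma width_pos p b : le 0 p -> band_dd L b p -> same_width L (p + ab b) b.
Proof.
move=> hp /band_ddE hb.
have E : disj L (fun x => x = p + ab b) = disj L (fun x => x = b).
  apply: functional_extensionality => y; apply: propositional_extensionality.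
  have hab := abs_ge0 b.
  have hpb : le 0 (p + ab b) by rewrite -(addr0 0); exact: le_add2.
  split=> h a' ->.
  - have := h _ erefl; rewrite /vmeet => _.
    have e : dsj y (p + ab b) by exact: h.
    apply: vle_anti; last by apply: meet_ge0; exact: abs_ge0.
    rewrite -e /dsj.
    apply: meet_glb; first exact: meet_lbl.
    apply: vle_trans (meet_lbr _ _) _.
    rewrite (abs_pos hpb) -{1}[ab b]add0r; apply: le_add2 hp (vle_refl _ _).
  - have e : dsj y b by exact: h.
    have e2 : dsj y p by apply: dsj_sym; apply: hb.
    have : dsj y (p + ab b).
      apply: vle_anti; last by apply: meet_ge0; exact: abs_ge0.
      rewrite (abs_pos hpb) meet_comm.
      apply: vle_trans (riesz hp hab (abs_ge0 y)) _.
      move: e e2; rewrite /dsj (abs_pos hp) [mt (ab y) (ab b)]meet_comm [mt (ab y) p]meet_comm => -> ->.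
      rewrite addr0; exact: vle_refl.
    done.
by rewrite /same_width /band_dd E.
Qed.
End Lat.

Lemma band_dd_abs (R : realType) (X : lmodType R) (L : vlattice X) a b :
  band_dd L b a -> band_dd L b (vabs L a).
Proof.
move=> /band_ddE h; apply/band_ddE => y hy.
have := h y hy; by rewrite /dsj (abs_pos (abs_ge0 L a)).
Qed.

Theorem theorem4p2 (R : realType) (X Y : lmodType R)
  (LX : vlattice X) (LY : vlattice Y)
  (HX : archimedean LX) (HY : archimedean LY)
  (T : {linear X -> Y}) :
  cond_beta LX LY T <-> cond_beta0 LX LY T.
Proof.
split.
- move=> hb a b hw.
  have h1 : lhd LX a b by move=> x; rewrite /same_width in hw; rewrite hw.
  have h2 : lhd LX b a by move=> x; rewrite /same_width in hw; rewrite hw.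
  have k1 := hb _ _ h1; have k2 := hb _ _ h2.
  apply: functional_extensionality => x; apply: propositional_extensionality.
  split; [exact: k1|exact: k2].
- move=> hb0 a b hab.
  have ha := band_of_lhd hab.
  have hA := band_dd_abs ha.
  have hp2 : band_dd LX b (a + vabs LX a) by exact: band_dd_add.
  have hp2p : vle LX 0 (a + vabs LX a).
    have := vle_add a (vjoin_ubr LX a (- a)); by rewrite addNr addrC.
  have w1 := hb0 _ _ (width_pos hp2p hp2).
  have w2 := hb0 _ _ (width_pos (abs_ge0 LX a) hA).
  have u1 : band_dd LY (T b) (T (a + vabs LX a + vabs LX b)).
    rewrite -w1; exact: band_dd_self.
  have u2 : band_dd LY (T b) (T (vabs LX a + vabs LX b)).
    rewrite -w2; exact: band_dd_self.
  have := band_dd_sub u1 u2; rewrite -linearB.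
  have -> : a + vabs LX a + vabs LX b - (vabs LX a + vabs LX b) = a by rewrite -[a + _ + _]addrA addrK.
  exact: lhd_of.
Qed.
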